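(* Let $X$ be a compact metric space and let $f\colon X\to X$ be a homeomorphism such that the restriction $f|_{\Omega(f)}\colon \Omega(f)\to\Omega(f)$ has the pseudo-orbit tracing property. If $f$ has a positively expansive measure, then $f$ has positive topological entropy, i.e. $h(f)>0$.
   Context: For a homeomorphism $g\colon Y\to Y$ of a metric space $(Y,d)$: given $\delta\ge 0$, a bi-infinite sequence $(x_i)_{i\in\mathbb{Z}}$ in $Y$ is a $\delta$-pseudo-orbit if $d(g(x_i),x_{i+1})\le\delta$ for all $i\in\mathbb{Z}$; it is $\epsilon$-shadowed if there is $x\in Y$ with $d(g^i(x),x_i)\le\epsilon$ for all $i\in\mathbb{Z}$. $g$ has the pseudo-orbit tracing property (POTP) if for every $\epsilon>0$ there is $\delta>0$ such that every $\delta$-pseudo-orbit of $g$ can be $\epsilon$-shadowed. The nonwandering set $\Omega(f)$ is the set of $x\in X$ such that for every neighborhood $U$ of $x$ there is $n\ge 1$ with $f^n(U)\cap U\ne\emptyset$; it is compact and $f(\Omega(f))=\Omega(f)$. For $x\in X$ and $\delta\ge0$ let $\Phi_\delta(x)=\{y\in X: d(f^i(x),f^i(y))\le\delta \text{ for all } i\in\mathbb{N}=\{0,1,2,\dots\}\}$. A (not necessarily invariant) Borel probability measure $\mu$ on $X$ is positively expansive if there is $e>0$ (an expansivity constant) such that $\mu(\Phi_e(x))=0$ for every $x\in X$. $h(f)$ denotes the topological entropy of $f$. *)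

(* Defs.v *)
From Stdlib Require Import Reals ZArith List.
Open Scope R_scope.

Definition is_metric {X : Type} (d : X -> X -> R) : Prop :=
  (forall x y, 0 <= d x y) /\
  (forall x y, d x y = 0 <-> x = y) /\
  (forall x y, d x y = d y x) /\
  (forall x y z, d x z <= d x y + d y z).

Definition compact_metric {X : Type} (d : X -> X -> R) : Prop :=
  forall u : nat -> X, exists (phi : nat -> nat) (l : X),
    (forall n m, (n < m)%nat -> (phi n < phi m)%nat) /\
    (forall eps, eps > 0 -> exists N, forall n, (n >= N)%nat -> d (u (phi n)) l < eps).

Definition continuous_map {X : Type} (d : X -> X -> R) (f : X -> X) : Prop :=
  forall x eps, eps > 0 -> exists delta, delta > 0 /\
    forall y, d x y < delta -> d (f x) (f y) < eps.

Definition homeomorphism {X : Type} (d : X -> X -> R) (f : X -> X) : Prop :=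
  exists g : X -> X, continuous_map d f /\ continuous_map d g /\
    (forall x, g (f x) = x) /\ (forall x, f (g x) = x).

Definition open_set {X : Type} (d : X -> X -> R) (U : X -> Prop) : Prop :=
  forall x, U x -> exists r, r > 0 /\ forall y, d x y < r -> U y.

Definition neighborhood {X : Type} (d : X -> X -> R) (x : X) (U : X -> Prop) : Prop :=
  exists V, open_set d V /\ V x /\ forall y, V y -> U y.

Definition nonwandering {X : Type} (d : X -> X -> R) (f : X -> X) (x : X) : Prop :=
  forall U, neighborhood d x U ->
    exists n : nat, (n >= 1)%nat /\ exists y, U y /\ U (Nat.iter n f y).

(* Since f is a bijection,
   the bi-infinite orbit (f^i x)_{i in Z} of x is the unique y : Z -> X with
   y 0 = x and y (i+1) = f (y i). *)
Definition potp_on_nonwandering {X : Type} (d : X -> X -> R) (f : X -> X) : Prop :=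
  forall eps, eps > 0 -> exists delta, delta > 0 /\
    forall xs : Z -> X,
      (forall i, nonwandering d f (xs i)) ->
      (forall i, d (f (xs i)) (xs (Z.succ i)) <= delta) ->
      exists x, nonwandering d f x /\
        exists y : Z -> X, y 0%Z = x /\ (forall i, y (Z.succ i) = f (y i)) /\
          (forall i, d (y i) (xs i) <= eps).

Definition sigma_algebra {X : Type} (S : (X -> Prop) -> Prop) : Prop :=
  S (fun _ => True) /\
  (forall A, S A -> S (fun x => ~ A x)) /\
  (forall A : nat -> X -> Prop, (forall n, S (A n)) -> S (fun x => exists n, A n x)).

Definition borel {X : Type} (d : X -> X -> R) (A : X -> Prop) : Prop :=
  forall S : (X -> Prop) -> Prop, sigma_algebra S ->
    (forall U, open_set d U -> S U) -> S A.

Definition borel_probability {X : Type} (d : X -> X -> R) (mu : (X -> Prop) -> R) : Prop :=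
  (forall A, borel d A -> 0 <= mu A) /\
  mu (fun _ => True) = 1 /\
  (forall A : nat -> X -> Prop,
     (forall n, borel d (A n)) ->
     (forall n m x, n <> m -> A n x -> A m x -> False) ->
     infinite_sum (fun n => mu (A n)) (mu (fun x => exists n, A n x))).

Definition Phi {X : Type} (d : X -> X -> R) (f : X -> X) (delta : R) (x : X) : X -> Prop :=
  fun y => forall i : nat, d (Nat.iter i f x) (Nat.iter i f y) <= delta.

Definition positively_expansive_measure {X : Type} (d : X -> X -> R) (f : X -> X)
  (mu : (X -> Prop) -> R) : Prop :=
  borel_probability d mu /\
  exists e, e > 0 /\ forall x, mu (Phi d f e x) = 0.

(* ---------- topological entropy (Bowen) ----------
   E is (n,eps)-separated if distinct points of E satisfy
   max_{0<=i<n} d(f^i x, f^i y) > eps.  With s(n,eps) the maximal cardinality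
   of such a (finite) set,
     h(f) = lim_{eps->0} limsup_n (1/n) log s(n,eps)
          = sup_{eps>0} limsup_n (1/n) log s(n,eps)   (monotone in eps).
   Hence h(f) > 0 iff for some eps > 0, limsup_n (1/n) log s(n,eps) > 0, i.e.
   there is c > 0 with (1/n) log s(n,eps) > c for infinitely many n, i.e.
   infinitely many n admit an (n,eps)-separated set of more than exp(c n) points. *)
Definition separated_set {X : Type} (d : X -> X -> R) (f : X -> X) (n : nat) (eps : R)
  (E : list X) : Prop :=
  NoDup E /\
  forall x y, In x E -> In y E -> x <> y ->
    exists i : nat, (i < n)%nat /\ d (Nat.iter i f x) (Nat.iter i f y) > eps.

Definition positive_topological_entropy {X : Type} (d : X -> X -> R) (f : X -> X) : Prop :=
  exists eps, eps > 0 /\ exists c, c > 0 /\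
    forall N : nat, exists n : nat, (n >= N)%nat /\ (n >= 1)%nat /\
      exists E, separated_set d f n eps E /\ exp (c * INR n) < INR (length E).

(* Main.v *)
From Stdlib Require Import Reals Lra Lia ZArith List FinFun ClassicalEpsilon Classical FunctionalExtensionality PropExtensionality.
Require Import Defs.
Open Scope R_scope.

Section Base.
Variable X : Type.
Variable d : X -> X -> R.
Hypothesis Hm : is_metric d.

Lemma d_pos x y : 0 <= d x y. Proof. apply Hm. Qed.
Lemma d_sym x y : d x y = d y x. Proof. apply Hm. Qed.
Lemma d_tri x y z : d x z <= d x y + d y z. Proof. apply Hm. Qed.
Lemma d_refl x : d x x = 0. Proof. apply Hm. reflexivity. Qed.
Lemma d_eq x y : d x y = 0 -> x = y. Proof. apply Hm. Qed.

Lemma TB (A : X -> Prop) (Rel : X -> X -> Prop) :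
  (forall u : nat -> X, (forall m, A (u m)) -> exists i j, (i < j)%nat /\ Rel (u j) (u i)) ->
  exists L : list X, (forall b, In b L -> A b) /\ forall a, A a -> exists b, In b L /\ Rel a b.
Proof.
  intros HT. apply NNPP; intro Hno.
  assert (H : forall L : list X, exists a : X,
     (forall b, In b L -> A b) -> A a /\ forall b, In b L -> ~ Rel a b).
  { intro L. destruct (classic (forall b, In b L -> A b)) as [HL|HL].
    - destruct (classic (exists a, A a /\ forall b, In b L -> ~ Rel a b)) as [[a Ha]|Hn].
      + exists a; auto.
      + exfalso; apply Hno. exists L; split; auto. intros a Ha.
        apply NNPP; intro Hc. apply Hn. exists a; split; auto.
        intros b Hb Hr. apply Hc. eauto.
    - destruct (classic (exists a, A a /\ forall b, In b nil -> ~ Rel a b)) as [[a Ha]|Hn].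
      + exists a. intro; contradiction.
      + exfalso; apply Hno. exists nil. split. intros b []. intros a Ha. exfalso; apply Hn.
        exists a; split; auto. }
  pose (h := fun L => proj1_sig (constructive_indefinite_description _ (H L))).
  assert (Hh : forall L, (forall b, In b L -> A b) -> A (h L) /\ forall b, In b L -> ~ Rel (h L) b).
  { intro L. unfold h. destruct (constructive_indefinite_description _ (H L)); simpl; auto. }
  pose (Lst := fix Lst (m : nat) : list X := match m with O => nil | S m => Lst m ++ (h (Lst m) :: nil) end).
  assert (HA : forall m b, In b (Lst m) -> A b).
  { induction m; simpl; intros b Hb. contradiction. apply in_app_or in Hb. destruct Hb as [Hb|[Hb|[]]].
    auto. subst. apply Hh; auto. }
  assert (HI : forall i m, (i < m)%nat -> In (h (Lst i)) (Lst m)).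
  { intros i m; induction m; intro Him. lia. simpl. apply in_or_app.
    destruct (Nat.eq_dec i m). subst; right; left; auto. left; apply IHm; lia. }
  destruct (HT (fun m => h (Lst m))) as [i [j [Hij HR]]].
  { intro m. apply Hh. apply HA. }
  destruct (Hh (Lst j) (HA j)) as [_ Hn]. apply (Hn _ (HI i j Hij)). exact HR.
Qed.

End Base.
Section Cpt.
Variable X : Type.
Variable d : X -> X -> R.
Variable f : X -> X.
Hypothesis Hm : is_metric d.
Hypothesis Hc : compact_metric d.
Hypothesis Hf : continuous_map d f.

Definition conv (v : nat -> X) (l : X) := forall eps, eps > 0 -> exists N, forall m, (m >= N)%nat -> d (v m) l < eps.

Lemma phi_ge (phi : nat -> nat) : (forall n m, (n < m)%nat -> (phi n < phi m)%nat) -> forall n, (n <= phi n)%nat.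
Proof. intros H n; induction n. lia. specialize (H n (S n) ltac:(lia)). lia. Qed.

Lemma phi_ge2 (phi : nat -> nat) : (forall n m, (n < m)%nat -> (phi n < phi m)%nat) -> forall n k, (phi n + k <= phi (n + k))%nat.
Proof. intros H n k; induction k. rewrite !Nat.add_0_r; lia. specialize (H (n+k)%nat (n + S k)%nat ltac:(lia)). lia. Qed.

Lemma conv_f v l : conv v l -> conv (fun m => f (v m)) (f l).
Proof.
  intros H eps Heps. destruct (Hf l eps Heps) as [de [Hde Hd]].
  destruct (H de Hde) as [N HN]. exists N; intros m Hm'. rewrite (d_sym _ _ Hm). apply Hd.
  rewrite (d_sym _ _ Hm). auto.
Qed.

Lemma conv_iter i v l : conv v l -> conv (fun m => Nat.iter i f (v m)) (Nat.iter i f l).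
Proof. induction i; intro H; simpl. auto. apply (conv_f (fun m => Nat.iter i f (v m))). auto. Qed.

Lemma conv_iter_fin n v l : conv v l -> forall eps, eps > 0 -> exists N, forall m, (m >= N)%nat ->
   forall i, (i < n)%nat -> d (Nat.iter i f (v m)) (Nat.iter i f l) < eps.
Proof.
  intros H eps Heps. induction n.
  - exists O; intros; lia.
  - destruct IHn as [N1 HN1]. destruct (conv_iter n v l H eps Heps) as [N2 HN2].
    exists (N1 + N2)%nat. intros m Hm' i Hi. destruct (Nat.eq_dec i n). subst. apply HN2; lia.
    apply HN1; lia.
Qed.

Lemma sub_conv (u : nat -> X) : exists (phi : nat -> nat) (l : X),
    (forall n m, (n < m)%nat -> (phi n < phi m)%nat) /\ conv (fun n => u (phi n)) l.
Proof. destruct (Hc u) as [phi [l [H1 H2]]]. exists phi, l; split; auto. Qed.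

Lemma unif_cont eps : eps > 0 -> exists rho, rho > 0 /\ forall a b, d a b < rho -> d (f a) (f b) < eps.
Proof.
  intro Heps. apply NNPP; intro Hno.
  assert (H : forall m : nat, exists p : X * X, d (fst p) (snd p) < / INR (S m) /\ d (f (fst p)) (f (snd p)) >= eps).
  { intro m. apply NNPP; intro Hn. apply Hno. exists (/ INR (S m)). split.
    apply Rinv_0_lt_compat; apply lt_0_INR; lia.
    intros a b Hab. apply Rnot_ge_lt. intro Hge. apply Hn. exists (a,b); simpl; auto. }
  pose (p := fun m => proj1_sig (constructive_indefinite_description _ (H m))).
  assert (Hp : forall m, d (fst (p m)) (snd (p m)) < / INR (S m) /\ d (f (fst (p m))) (f (snd (p m))) >= eps).
  { intro m; unfold p; destruct (constructive_indefinite_description _ (H m)); auto. }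
  destruct (sub_conv (fun m => fst (p m))) as [phi [l [Hphi Hl]]].
  destruct (Hf l (eps/2) ltac:(lra)) as [de [Hde Hd]].
  destruct (Hl (de/2) ltac:(lra)) as [N1 HN1].
  destruct (archimed_cor1 (de/2) ltac:(lra)) as [N2 [HN2a HN2b]].
  pose (m := (N1 + N2)%nat).
  specialize (HN1 m ltac:(unfold m; lia)). simpl in HN1.
  destruct (Hp (phi m)) as [Hp1 Hp2].
  assert (Hinv : / INR (S (phi m)) <= / INR N2).
  { apply Rinv_le_contravar. apply lt_0_INR; lia. apply le_INR. pose proof (phi_ge phi Hphi m). unfold m in *; lia. }
  set (a := fst (p (phi m))) in *. set (b := snd (p (phi m))) in *.
  assert (Ha : d l a < de). { rewrite (d_sym _ _ Hm). lra. }
  assert (Hb : d l b < de). { pose proof (d_tri _ _ Hm l a b). rewrite (d_sym _ _ Hm) in HN1. lra. }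
  pose proof (Hd a Ha). pose proof (Hd b Hb). pose proof (d_tri _ _ Hm (f a) (f l) (f b)).
  rewrite (d_sym _ _ Hm (f a) (f l)) in H2. lra.
Qed.

Lemma TB_ball (A : X -> Prop) r : r > 0 -> exists L : list X, (forall b, In b L -> A b) /\ forall a, A a -> exists b, In b L /\ d a b < r.
Proof.
  intro Hr. apply TB. auto. intros u Hu. destruct (sub_conv u) as [phi [l [Hphi Hl]]].
  destruct (Hl (r/2) ltac:(lra)) as [N HN]. exists (phi N), (phi (S N)). split. apply Hphi; lia.
  pose proof (HN N ltac:(lia)). pose proof (HN (S N) ltac:(lia)). simpl in *.
  pose proof (d_tri _ _ Hm (u (phi (S N))) l (u (phi N))). rewrite (d_sym _ _ Hm l) in H1. lra.
Qed.

Lemma TB_bowen (A : X -> Prop) n r : r > 0 -> exists L : list X, (forall b, In b L -> A b) /\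
   forall a, A a -> exists b, In b L /\ forall i, (i < n)%nat -> d (Nat.iter i f a) (Nat.iter i f b) <= r.
Proof.
  intro Hr. apply TB. auto. intros u Hu. destruct (sub_conv u) as [phi [l [Hphi Hl]]].
  destruct (conv_iter_fin n _ _ Hl (r/2) ltac:(lra)) as [N HN]. exists (phi N), (phi (S N)). split. apply Hphi; lia.
  intros i Hi.
  pose proof (HN N ltac:(lia) i Hi). pose proof (HN (S N) ltac:(lia) i Hi). simpl in *.
  pose proof (d_tri _ _ Hm (Nat.iter i f (u (phi (S N)))) (Nat.iter i f l) (Nat.iter i f (u (phi N)))).
  rewrite (d_sym _ _ Hm (Nat.iter i f l)) in H1. lra.
Qed.

End Cpt.
Section Meas.
Variable X : Type.
Variable d : X -> X -> R.
Variable mu : (X -> Prop) -> R.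
Hypothesis Hmu : borel_probability d mu.

Definition E0 : X -> Prop := fun _ => False.

Lemma borel_open U : open_set d U -> borel d U.
Proof. intros HU S HS HO. auto. Qed.
Lemma borel_compl A : borel d A -> borel d (fun x => ~ A x).
Proof. intros HA S HS HO. apply HS. apply HA; auto. Qed.
Lemma borel_cunion (A : nat -> X -> Prop) : (forall n, borel d (A n)) -> borel d (fun x => exists n, A n x).
Proof. intros HA S HS HO. apply HS. intro n; apply HA; auto. Qed.
Lemma borel_True : borel d (fun _ => True).
Proof. intros S HS HO. apply HS. Qed.
Lemma borel_ext A B : (forall x, A x <-> B x) -> borel d A -> borel d B.
Proof. intros H HA. replace B with A. auto. apply functional_extensionality; intro x; apply propositional_extensionality; auto. Qed.
Lemma borel_E0 : borel d E0.
Proof. apply (borel_ext (fun x => ~ True)). unfold E0; tauto. apply borel_compl, borel_True. Qed.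
Definition seq2 (A B : X -> Prop) (n : nat) : X -> Prop := match n with O => A | S O => B | _ => E0 end.
Lemma borel_or A B : borel d A -> borel d B -> borel d (fun x => A x \/ B x).
Proof.
  intros HA HB. apply (borel_ext (fun x => exists n, seq2 A B n x)).
  { intro x; split. intros [n Hn]. destruct n as [|[|n]]; simpl in Hn; auto. contradiction.
    intros [H|H]. exists O; auto. exists 1%nat; auto. }
  apply borel_cunion. intros [|[|n]]; simpl; auto. apply borel_E0.
Qed.
Lemma borel_and A B : borel d A -> borel d B -> borel d (fun x => A x /\ B x).
Proof.
  intros HA HB. apply (borel_ext (fun x => ~ (~ A x \/ ~ B x))). intro x; tauto.
  apply borel_compl, borel_or; apply borel_compl; auto.
Qed.
Lemma borel_closed A : open_set d (fun x => ~ A x) -> borel d A.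
Proof. intro H. apply (borel_ext (fun x => ~ ~ A x)). intro; tauto. apply borel_compl, borel_open; auto. Qed.

Lemma sum_const_cv c : Un_cv (sum_f_R0 (fun _ => c)) c -> c = 0.
Proof.
  intro H. destruct (Req_dec c 0) as [|Hc]; auto. exfalso.
  assert (Hp : Rabs c / 2 > 0). { pose proof (Rabs_pos_lt c Hc). lra. }
  destruct (H _ Hp) as [N HN]. pose proof (HN N ltac:(lia)). pose proof (HN (S N) ltac:(lia)).
  unfold R_dist in *. simpl in H1.
  pose proof (Rabs_triang (sum_f_R0 (fun _ => c) N + c - c) (-(sum_f_R0 (fun _ => c) N - c))).
  replace (sum_f_R0 (fun _ => c) N + c - c + - (sum_f_R0 (fun _ => c) N - c)) with c in H2 by ring.
  rewrite Rabs_Ropp in H2. lra.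
Qed.

Lemma mu_E0 : mu E0 = 0.
Proof.
  destruct Hmu as [_ [_ Hadd]].
  specialize (Hadd (fun _ => E0) (fun _ => borel_E0) ltac:(unfold E0; tauto)). cbv beta in Hadd.
  replace (fun x => exists n : nat, E0 x) with E0 in Hadd.
  apply sum_const_cv; auto.
  apply functional_extensionality; intro x; apply propositional_extensionality. unfold E0; split. tauto. intros [_ []].
Qed.

Lemma mu_add2 A B : borel d A -> borel d B -> (forall x, A x -> B x -> False) ->
  mu (fun x => A x \/ B x) = mu A + mu B.
Proof.
  intros HA HB Hdis. destruct Hmu as [_ [_ Hadd]].
  assert (Hb : forall n, borel d (seq2 A B n)). { intros [|[|n]]; simpl; auto. apply borel_E0. }
  assert (Hd : forall n m x, n <> m -> seq2 A B n x -> seq2 A B m x -> False).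
  { intros [|[|n]] [|[|m]] x Hnm; simpl; try tauto; unfold E0; try tauto; eauto. }
  specialize (Hadd _ Hb Hd). cbv beta in Hadd.
  replace (fun x => exists n, seq2 A B n x) with (fun x => A x \/ B x) in Hadd.
  2:{ apply functional_extensionality; intro x; apply propositional_extensionality. split.
    intros [H|H]. exists O; auto. exists 1%nat; auto.
    intros [n Hn]. destruct n as [|[|n]]; simpl in Hn; auto. contradiction. }
  apply (UL_sequence _ _ _ Hadd). intros eps Heps. exists 1%nat. intros n Hn.
  assert (sum_f_R0 (fun n => mu (seq2 A B n)) n = mu A + mu B).
  { induction n. lia. destruct n. simpl. ring. simpl in *. rewrite IHn by lia. rewrite mu_E0. ring. }
  rewrite H. unfold R_dist. rewrite Rminus_diag, Rabs_R0. auto.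
Qed.

Lemma mu_mono A B : borel d A -> borel d B -> (forall x, A x -> B x) -> mu A <= mu B.
Proof.
  intros HA HB Hs. destruct Hmu as [Hpos _].
  assert (Hc : borel d (fun x => B x /\ ~ A x)). { apply borel_and; auto. apply borel_compl; auto. }
  pose proof (mu_add2 A (fun x => B x /\ ~ A x) HA Hc ltac:(intros x Ha [_ Hb]; auto)). cbv beta in H.
  replace (fun x => A x \/ B x /\ ~ A x) with B in H.
  pose proof (Hpos _ Hc). lra.
  apply functional_extensionality; intro x; apply propositional_extensionality. split.
  intro. destruct (classic (A x)); auto. intros [H1|[H1 _]]; auto.
Qed.

Definition Null (A : X -> Prop) := exists B, borel d B /\ (forall x, A x -> B x) /\ mu B = 0.

Lemma Null_sub A B : Null B -> (forall x, A x -> B x) -> Null A.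
Proof. intros [C [H1 [H2 H3]]] H. exists C; split; auto. Qed.

Lemma Null_cunion (A : nat -> X -> Prop) : (forall k, Null (A k)) -> Null (fun x => exists k, A k x).
Proof.
  intro HA. pose (B := fun k => proj1_sig (constructive_indefinite_description _ (HA k))).
  assert (HB : forall k, borel d (B k) /\ (forall x, A k x -> B k x) /\ mu (B k) = 0).
  { intro k; unfold B; destruct (constructive_indefinite_description _ (HA k)); auto. }
  pose (D := fun k x => B k x /\ forall j, (j < k)%nat -> ~ B j x).
  assert (HDb : forall k, borel d (D k)).
  { intro k. apply borel_and. apply HB.
    apply (borel_ext (fun x => ~ exists j, (if lt_dec j k then B j else E0) x)).
    { intro x; split.
      - intros Hn j Hj Hb. apply Hn. exists j. destruct (lt_dec j k) as [l|l]; [exact Hb | lia].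
      - intros Hall [j Hb]. destruct (lt_dec j k) as [l|l]; [exact (Hall j l Hb) | exact Hb]. }
    apply borel_compl, borel_cunion. intro j. destruct (lt_dec j k). apply HB. apply borel_E0. }
  assert (HD0 : forall k, mu (D k) = 0).
  { intro k. destruct Hmu as [Hpos _]. pose proof (Hpos _ (HDb k)).
    pose proof (mu_mono (D k) (B k) (HDb k) (proj1 (HB k)) ltac:(unfold D; tauto)).
    destruct (HB k) as [_ [_ H3]]. lra. }
  exists (fun x => exists k, D k x). split; [|split].
  - apply borel_cunion; auto.
  - intros x [k Hk]. apply (proj1 (proj2 (HB k))) in Hk.
    revert Hk. induction k as [k IH] using lt_wf_ind. intro Hk.
    destruct (classic (exists j, (j < k)%nat /\ B j x)) as [[j [Hj Hbj]]|Hn].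
    + apply (IH j Hj Hbj).
    + exists k. split; auto. intros j Hj Hb. apply Hn; eauto.
  - destruct Hmu as [_ [_ Hadd]].
    assert (Hdis : forall n m x, n <> m -> D n x -> D m x -> False).
    { intros n m x Hnm [H1 H2] [H3 H4]. destruct (lt_dec n m). apply (H4 n); auto. apply (H2 m); auto; lia. }
    specialize (Hadd _ HDb Hdis). apply (UL_sequence _ _ _ Hadd).
    intros eps Heps. exists O. intros n _.
    assert (sum_f_R0 (fun n => mu (D n)) n = 0).
    { induction n; simpl. apply HD0. rewrite IHn, HD0. ring. }
    rewrite H. unfold R_dist. rewrite Rminus_diag, Rabs_R0. auto.
Qed.

Lemma Null_list {Y : Type} (P : Y -> X -> Prop) (L : list Y) : (forall g, In g L -> Null (P g)) ->
  Null (fun x => exists g, In g L /\ P g x).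
Proof.
  induction L as [|a L IH]; intro H.
  - exists E0. split. apply borel_E0. split. intros x [g [[] _]]. apply mu_E0.
  - apply (Null_sub _ (fun x => exists k, seq2 (P a) (fun x => exists g, In g L /\ P g x) k x)).
    + apply Null_cunion. intros [|[|k]]; simpl. apply H; simpl; auto. apply IH; intros; apply H; simpl; auto.
      exists E0. split. apply borel_E0. split; auto. apply mu_E0.
    + intros x [g [[Hg|Hg] Hp]]. subst; exists O; auto. exists 1%nat; simpl; eauto.
Qed.

Lemma not_Null_True : ~ Null (fun _ => True).
Proof.
  intros [B [HB [Hs H0]]]. destruct Hmu as [_ [H1 _]].
  replace B with (fun _ : X => True) in H0. lra.
  apply functional_extensionality; intro x; apply propositional_extensionality; split; auto.
Qed.

End Meas.
Fixpoint all_words (M : nat) : list (list bool) :=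
  match M with O => nil :: nil | S M => map (cons true) (all_words M) ++ map (cons false) (all_words M) end.

Lemma all_words_len M : length (all_words M) = (2 ^ M)%nat.
Proof. induction M; simpl; auto. rewrite length_app, !length_map, IHM. lia. Qed.

Lemma all_words_size M l : In l (all_words M) -> length l = M.
Proof.
  revert l; induction M; simpl; intros l H. destruct H as [H|[]]; subst; auto.
  apply in_app_or in H. destruct H as [H|H]; apply in_map_iff in H; destruct H as [l' [H1 H2]]; subst; simpl; auto.
Qed.

Lemma all_words_nodup M : NoDup (all_words M).
Proof.
  induction M; simpl. constructor. intros []. constructor.
  apply NoDup_app. apply FinFun.Injective_map_NoDup; auto. intros x y H; inversion H; auto.
  apply FinFun.Injective_map_NoDup; auto. intros x y H; inversion H; auto.
  intros a H1 H2. apply in_map_iff in H1. apply in_map_iff in H2. destruct H1 as [x [Hx _]]. destruct H2 as [y [Hy _]].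
  subst. discriminate.
Qed.

Lemma words_differ (l l' : list bool) M : length l = M -> length l' = M -> l <> l' ->
  exists q, (q < M)%nat /\ nth q l true <> nth q l' true.
Proof.
  revert l' M; induction l as [|a l IH]; intros l' M H1 H2 Hne; destruct l' as [|a' l']; simpl in *.
  - contradiction.
  - lia.
  - lia.
  - destruct (Bool.bool_dec a a') as [->|Ha].
    + destruct (IH l' (pred M) ltac:(lia) ltac:(lia)) as [q [Hq Hn]]. intro; subst; auto.
      exists (S q). split. lia. simpl; auto.
    + exists O. split. lia. simpl; auto.
Qed.

Lemma divmod_eq (L q r : nat) : (r < L)%nat -> ((q * L + r) / L = q /\ (q * L + r) mod L = r)%nat.
Proof.
  intro H. split. symmetry; apply (Nat.div_unique _ _ _ r); lia. symmetry; apply (Nat.mod_unique _ _ q); lia.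
Qed.

Section Horse.
Variable X : Type.
Variable d : X -> X -> R.
Variable f : X -> X.
Hypothesis Hm : is_metric d.
Variable g : X -> X.
Hypothesis Hfg : forall x, f (g x) = x.
Hypothesis HgO : forall x, nonwandering d f x -> nonwandering d f (g x).

Lemma horseshoe eps delta : eps > 0 ->
  (forall xs : Z -> X,
      (forall i, nonwandering d f (xs i)) ->
      (forall i, d (f (xs i)) (xs (Z.succ i)) <= delta) ->
      exists x, nonwandering d f x /\
        exists y : Z -> X, y 0%Z = x /\ (forall i, y (Z.succ i) = f (y i)) /\
          (forall i, d (y i) (xs i) <= eps)) ->
  forall (a b : nat) (A B : nat -> X), (a >= 1)%nat -> (b >= 1)%nat -> A O = B O ->
  (forall i, (i < a)%nat -> nonwandering d f (A i)) ->
  (forall i, (i < b)%nat -> nonwandering d f (B i)) ->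
  (forall i, (i + 1 < a)%nat -> d (f (A i)) (A (S i)) <= delta) ->
  (forall i, (i + 1 < b)%nat -> d (f (B i)) (B (S i)) <= delta) ->
  d (f (A (pred a))) (A O) <= delta ->
  d (f (B (pred b))) (B O) <= delta ->
  forall t, (t < a)%nat -> (t < b)%nat -> d (A t) (B t) > 4 * eps ->
  positive_topological_entropy d f.
Proof.
  intros Heps HP a b A B Ha Hb HAB HAO HBO HAs HBs HAc HBc t Hta Htb Hsep.
  assert (Hdel : 0 <= delta). { pose proof (d_pos _ _ Hm (f (A (pred a))) (A O)). lra. }
  set (L := (a + b)%nat).
  set (k := A O).
  set (C := fun (c : bool) (i : nat) => if c then (if Nat.ltb i a then A i else B (i - a)%nat)
                                        else (if Nat.ltb i b then B i else A (i - b)%nat)).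
  assert (HC0 : forall c, C c O = k).
  { intros [|]; unfold C, k. replace (Nat.ltb 0 a) with true. auto. symmetry; apply Nat.ltb_lt; lia.
    replace (Nat.ltb 0 b) with true. auto. symmetry; apply Nat.ltb_lt; lia. }
  assert (HCO : forall c i, (i < L)%nat -> nonwandering d f (C c i)).
  { intros [|] i Hi; unfold C; destruct (Nat.ltb_spec i a); destruct (Nat.ltb_spec i b);
    try (apply HAO; unfold L in *; lia); try (apply HBO; unfold L in *; lia). }
  assert (HCs : forall c i, (i + 1 < L)%nat -> d (f (C c i)) (C c (S i)) <= delta).
  { intros [|] i Hi; unfold C.
    - destruct (Nat.ltb_spec i a); destruct (Nat.ltb_spec (S i) a).
      + apply HAs; lia.
      + replace (S i - a)%nat with O by lia. rewrite <- HAB. replace i with (pred a) by lia. auto.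
      + lia.
      + replace (S i - a)%nat with (S (i - a)) by lia. apply HBs. unfold L in *; lia.
    - destruct (Nat.ltb_spec i b); destruct (Nat.ltb_spec (S i) b).
      + apply HBs; lia.
      + replace (S i - b)%nat with O by lia. rewrite HAB. replace i with (pred b) by lia. auto.
      + lia.
      + replace (S i - b)%nat with (S (i - b)) by lia. apply HAs. unfold L in *; lia. }
  assert (HCc : forall c, d (f (C c (pred L))) k <= delta).
  { intros [|]; unfold C, k, L.
    - destruct (Nat.ltb_spec (pred (a + b)) a). lia. replace (pred (a+b) - a)%nat with (pred b) by lia.
      rewrite HAB. auto.
    - destruct (Nat.ltb_spec (pred (a + b)) b). lia. replace (pred (a+b) - b)%nat with (pred a) by lia. auto. }
  assert (HCsep : forall c c', c <> c' -> d (C c t) (C c' t) > 4 * eps).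
  { assert (Ht1 : C true t = A t). { unfold C. destruct (Nat.ltb_spec t a); auto; lia. }
    assert (Ht2 : C false t = B t). { unfold C. destruct (Nat.ltb_spec t b); auto; lia. }
    intros [|] [|] Hc; try (exfalso; auto; fail). rewrite Ht1, Ht2; auto. rewrite Ht1, Ht2, (d_sym _ _ Hm); auto. }
  assert (HL : (L >= 2)%nat) by (unfold L; lia).
  set (P := fun (w : nat -> bool) (m : nat) => C (w (m / L)%nat) (m mod L)).
  assert (HPqr : forall w q r, (r < L)%nat -> P w (q * L + r)%nat = C (w q) r).
  { intros w q r Hr. unfold P. destruct (divmod_eq L q r Hr) as [-> ->]. auto. }
  assert (Hdecomp : forall m, exists q r, (r < L)%nat /\ m = (q * L + r)%nat).
  { intro m. exists (m / L)%nat, (m mod L). split. apply Nat.mod_upper_bound; lia.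
    rewrite (Nat.div_mod_eq m L) at 1. lia. }
  assert (HPO : forall w m, nonwandering d f (P w m)).
  { intros w m. unfold P. apply HCO. apply Nat.mod_upper_bound; lia. }
  assert (HPs : forall w m, d (f (P w m)) (P w (S m)) <= delta).
  { intros w m. destruct (Hdecomp m) as [q [r [Hr ->]]].
    destruct (Nat.eq_dec (S r) L).
    - replace (S (q * L + r)) with (S q * L + 0)%nat by (simpl; lia). rewrite HPqr, HPqr by lia.
      rewrite HC0. replace r with (pred L) by lia. apply HCc.
    - replace (S (q * L + r)) with (q * L + S r)%nat by lia. rewrite HPqr, HPqr by lia. apply HCs. lia. }
  assert (HP0 : forall w, P w O = k). { intro w. unfold P. rewrite Nat.Div0.mod_0_l. apply HC0. }
  set (xs := fun (w : nat -> bool) (i : Z) => if Z.ltb i 0 then Nat.iter (Z.to_nat (- i)) g k else P w (Z.to_nat i)).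
  assert (Hgk : forall m, nonwandering d f (Nat.iter m g k)).
  { induction m; simpl. unfold k. apply HAO; lia. auto. }
  assert (Hxs1 : forall w i, nonwandering d f (xs w i)).
  { intros w i; unfold xs. destruct (Z.ltb i 0); auto. }
  assert (Hxs2 : forall w i, d (f (xs w i)) (xs w (Z.succ i)) <= delta).
  { intros w i. unfold xs. destruct (Z.ltb_spec i 0); destruct (Z.ltb_spec (Z.succ i) 0).
    - replace (Z.to_nat (- i)) with (S (Z.to_nat (- Z.succ i))) by lia. simpl. rewrite Hfg, (d_refl _ _ Hm); auto.
    - replace (Z.to_nat (- i)) with 1%nat by lia. replace (Z.to_nat (Z.succ i)) with O by lia. simpl.
      rewrite Hfg, HP0, (d_refl _ _ Hm); auto.
    - lia.
    - replace (Z.to_nat (Z.succ i)) with (S (Z.to_nat i)) by lia. apply HPs. }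
  assert (HSH : forall w, exists x, forall m, d (Nat.iter m f x) (P w m) <= eps).
  { intro w. destruct (HP (xs w) (Hxs1 w) (Hxs2 w)) as [x [_ [y [Hy0 [Hys Hyd]]]]].
    exists x. intro m. assert (Hym : y (Z.of_nat m) = Nat.iter m f x).
    { induction m. simpl; auto. rewrite Nat2Z.inj_succ, Hys, IHm. reflexivity. }
    rewrite <- Hym. specialize (Hyd (Z.of_nat m)). unfold xs in Hyd.
    destruct (Z.ltb_spec (Z.of_nat m) 0). lia. rewrite Nat2Z.id in Hyd. auto. }
  set (SH := fun w => proj1_sig (constructive_indefinite_description _ (HSH w))).
  assert (HSHp : forall w m, d (Nat.iter m f (SH w)) (P w m) <= eps).
  { intro w. unfold SH. destruct (constructive_indefinite_description _ (HSH w)); auto. }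
  assert (Hsepw : forall w w' q, w q <> w' q -> d (Nat.iter (q * L + t) f (SH w)) (Nat.iter (q * L + t) f (SH w')) > eps).
  { intros w w' q Hq. pose proof (HSHp w (q * L + t)%nat). pose proof (HSHp w' (q * L + t)%nat).
    rewrite HPqr in H, H0 by lia. pose proof (HCsep _ _ Hq).
    set (u := Nat.iter (q * L + t) f (SH w)) in *. set (u' := Nat.iter (q * L + t) f (SH w')) in *.
    pose proof (d_tri _ _ Hm (C (w q) t) u (C (w' q) t)). pose proof (d_tri _ _ Hm u u' (C (w' q) t)).
    rewrite (d_sym _ _ Hm u) in H. lra. }
  exists eps. split; auto.
  exists (ln 2 / (2 * INR L)). split.
  { apply Rdiv_lt_0_compat. rewrite <- ln_1. apply ln_increasing; lra. assert (0 < INR L) by (apply lt_0_INR; lia). lra. }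
  intro N. set (M := S N). exists (M * L)%nat. split. unfold M; nia. split. unfold M; nia.
  set (W := fun l : list bool => fun q => nth q l true).
  exists (map (fun l => SH (W l)) (all_words M)). split.
  - split.
    + apply NoDup_map_NoDup_ForallPairs; [|apply all_words_nodup].
      intros l l' Hl Hl' Heq. apply NNPP; intro Hne.
      destruct (words_differ l l' M (all_words_size _ _ Hl) (all_words_size _ _ Hl') Hne) as [q [_ Hq]].
      pose proof (Hsepw (W l) (W l') q Hq). rewrite Heq, (d_refl _ _ Hm) in H. lra.
    + intros x y Hx Hy Hxy. apply in_map_iff in Hx. apply in_map_iff in Hy.
      destruct Hx as [l [Hx Hl]]. destruct Hy as [l' [Hy Hl']]. subst.
      assert (Hne : l <> l'). { intro; subst; auto. }
      destruct (words_differ l l' M (all_words_size _ _ Hl) (all_words_size _ _ Hl') Hne) as [q [HqM Hq]].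
      exists (q * L + t)%nat. split. nia. apply Hsepw. auto.
  - rewrite length_map, all_words_len, pow_INR. simpl INR.
    assert (Hexp : forall n, exp (INR n * ln 2) = 2 ^ n).
    { induction n. simpl. rewrite Rmult_0_l, exp_0; auto. rewrite S_INR, Rmult_plus_distr_r, exp_plus, IHn, Rmult_1_l, exp_ln by lra. simpl; ring. }
    rewrite <- Hexp. apply exp_increasing.
    assert (0 < INR L) by (apply lt_0_INR; lia). assert (0 < ln 2) by (rewrite <- ln_1; apply ln_increasing; lra).
    assert (1 <= INR M) by (apply (le_INR 1); unfold M; lia).
    replace (INR (L + N * L)) with (INR M * INR L) by (rewrite <- mult_INR; f_equal; unfold M; lia).
    replace (ln 2 / (2 * INR L) * (INR M * INR L)) with (INR M * ln 2 / 2) by (field; lra). nra.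
Qed.

End Horse.
Section Main.
Variable X : Type.
Variable d : X -> X -> R.
Variable f : X -> X.
Hypothesis Hm : is_metric d.
Hypothesis Hc : compact_metric d.
Hypothesis Hf : continuous_map d f.
Variable g : X -> X.
Hypothesis Hg : continuous_map d g.
Hypothesis Hgf : forall x, g (f x) = x.
Hypothesis Hfg : forall x, f (g x) = x.

Notation Om := (nonwandering d f).

Lemma iter_g_comm n y : Nat.iter n f (g y) = g (Nat.iter n f y).
Proof. induction n; simpl; auto. rewrite IHn, Hfg, Hgf. auto. Qed.

Lemma Om_g x : Om x -> Om (g x).
Proof.
  intros Hx U [V [HVo [HVx HVU]]].
  destruct (Hx (fun y => V (g y))) as [n [Hn [y [Hy1 Hy2]]]].
  { exists (fun y => V (g y)). split; [|split; auto].
    intros y Hy. destruct (HVo _ Hy) as [r [Hr Hb]]. destruct (Hg y r Hr) as [de [Hde Hd]].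
    exists de; split; auto. }
  exists n; split; auto. exists (g y). split; auto. rewrite iter_g_comm. auto.
Qed.

Lemma iter_cont i x eps : eps > 0 -> exists de, de > 0 /\ forall z, d x z < de -> d (Nat.iter i f x) (Nat.iter i f z) < eps.
Proof.
  revert eps; induction i; intros eps Heps; simpl.
  - exists eps; auto.
  - destruct (Hf (Nat.iter i f x) eps Heps) as [d1 [Hd1 H1]]. destruct (IHi d1 Hd1) as [d2 [Hd2 H2]].
    exists d2; auto.
Qed.

Lemma near_Omega eta x : eta > 0 -> exists n0, forall t, (t >= n0)%nat -> exists p, Om p /\ d (Nat.iter t f x) p < eta.
Proof.
  intro Heta. apply NNPP; intro Hno.
  assert (H : forall n0, exists t, (t >= n0)%nat /\ forall p, Om p -> d (Nat.iter t f x) p >= eta).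
  { intro n0. apply NNPP; intro Hn. apply Hno. exists n0. intros t Ht. apply NNPP; intro Hn2. apply Hn.
    exists t; split; auto. intros p Hp. apply Rnot_lt_ge. intro. apply Hn2; eauto. }
  pose (tau := fun n0 => proj1_sig (constructive_indefinite_description _ (H n0))).
  assert (Htau : forall n0, (tau n0 >= n0)%nat /\ forall p, Om p -> d (Nat.iter (tau n0) f x) p >= eta).
  { intro n0; unfold tau; destruct (constructive_indefinite_description _ (H n0)); auto. }
  pose (T := fix T (j : nat) : nat := match j with O => tau O | S j => tau (S (T j)) end).
  assert (HT1 : forall j, (T j < T (S j))%nat). { intro j. simpl. pose proof (proj1 (Htau (S (T j)))). lia. }
  assert (HT : forall i j, (i < j)%nat -> (T i < T j)%nat).
  { intros i j; induction j; intro Hij. lia. destruct (Nat.eq_dec i j). subst; auto. pose proof (HT1 j). specialize (IHj ltac:(lia)). lia. }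
  assert (Hfar : forall j p, Om p -> d (Nat.iter (T j) f x) p >= eta).
  { intros [|j] p Hp; simpl; apply Htau; auto. }
  destruct (sub_conv _ _ Hc (fun j => Nat.iter (T j) f x)) as [phi [v [Hphi Hv]]].
  assert (Hvo : Om v).
  { intros U [V [HVo [HVv HVU]]]. destruct (HVo v HVv) as [r [Hr Hb]].
    destruct (Hv r Hr) as [N HN].
    pose proof (HN N ltac:(lia)). pose proof (HN (S N) ltac:(lia)). simpl in *.
    pose proof (HT _ _ (Hphi N (S N) ltac:(lia))).
    exists (T (phi (S N)) - T (phi N))%nat. split. lia.
    exists (Nat.iter (T (phi N)) f x). split. apply HVU, Hb. rewrite (d_sym _ _ Hm); auto.
    rewrite <- Nat.iter_add. replace (T (phi (S N)) - T (phi N) + T (phi N))%nat with (T (phi (S N))) by lia.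
    apply HVU, Hb. rewrite (d_sym _ _ Hm); auto. }
  destruct (Hv eta Heta) as [N HN]. specialize (HN N ltac:(lia)). simpl in HN.
  pose proof (Hfar (phi N) v Hvo). lra.
Qed.

Definition Good eta x n := (forall t, exists p, Om p /\ d (Nat.iter (n + t) f x) p < eta) /\
  (forall T, exists s, (s > T)%nat /\ d (Nat.iter (n + s) f x) (Nat.iter n f x) < eta).

Lemma exists_good eta x : eta > 0 -> exists n, Good eta x n.
Proof.
  intro Heta. destruct (near_Omega eta x Heta) as [n0 Hn0].
  destruct (sub_conv _ _ Hc (fun j => Nat.iter j f x)) as [phi [w [Hphi Hw]]].
  destruct (Hw (eta/2) ltac:(lra)) as [N HN]. simpl in HN.
  pose proof (phi_ge phi Hphi).
  exists (phi (N + n0)%nat). split.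
  - intro t. apply Hn0. specialize (H (N + n0)%nat). lia.
  - intro T. exists (phi (N + n0 + S T)%nat - phi (N + n0)%nat)%nat.
    pose proof (phi_ge2 phi Hphi (N + n0)%nat (S T)). split. lia.
    replace (phi (N + n0)%nat + (phi (N + n0 + S T)%nat - phi (N + n0)%nat))%nat with (phi (N + n0 + S T)%nat) by lia.
    pose proof (HN (N + n0 + S T)%nat ltac:(lia)). pose proof (HN (N + n0)%nat ltac:(lia)).
    pose proof (d_tri _ _ Hm (Nat.iter (phi (N + n0 + S T)%nat) f x) w (Nat.iter (phi (N + n0)%nat) f x)).
    rewrite (d_sym _ _ Hm w) in H3. lra.
Qed.

Lemma compare eps delta rho eta : eps > 0 ->
  (forall xs : Z -> X,
      (forall i, nonwandering d f (xs i)) ->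
      (forall i, d (f (xs i)) (xs (Z.succ i)) <= delta) ->
      exists x, nonwandering d f x /\
        exists y : Z -> X, y 0%Z = x /\ (forall i, y (Z.succ i) = f (y i)) /\
          (forall i, d (y i) (xs i) <= eps)) ->
  rho > 0 -> (forall a b, d a b < rho -> d (f a) (f b) < delta / 4) ->
  eta > 0 -> 3 * eta <= rho -> 8 * eta <= delta ->
  ~ positive_topological_entropy d f ->
  forall x n x' n', Good eta x n -> Good eta x' n' -> d (Nat.iter n f x) (Nat.iter n' f x') < eta ->
  forall t, d (Nat.iter (n + t) f x) (Nat.iter (n' + t) f x') <= 4 * eps + 2 * eta.
Proof.
  intros Heps HP Hrho Hu Heta H3 H8 Hno x n x' n' [G1 G2] [G1' G2'] Hxx' t.
  assert (Hstep : forall z m q q', d (Nat.iter m f z) q < eta -> d (Nat.iter (S m) f z) q' < eta -> d (f q) q' < delta / 4 + eta).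
  { intros z m q q' H1 H2. simpl in H2. pose proof (d_tri _ _ Hm (f q) (f (Nat.iter m f z)) q').
    assert (d q (Nat.iter m f z) < rho) by (rewrite (d_sym _ _ Hm); lra). pose proof (Hu _ _ H0). lra. }
  assert (HS : forall k i, Nat.iter (k + S i) f = fun z => Nat.iter (S (k + i)) f z).
  { intros k i. rewrite Nat.add_succ_r. reflexivity. }
  destruct t as [|t].
  - rewrite !Nat.add_0_r. lra.
  - pose (p := fun i => proj1_sig (constructive_indefinite_description _ (G1 i))).
    assert (Hp : forall i, Om (p i) /\ d (Nat.iter (n + i) f x) (p i) < eta).
    { intro i; unfold p; destruct (constructive_indefinite_description _ (G1 i)); auto. }
    pose (p' := fun i => proj1_sig (constructive_indefinite_description _ (G1' i))).
    assert (Hp' : forall i, Om (p' i) /\ d (Nat.iter (n' + i) f x') (p' i) < eta).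
    { intro i; unfold p'; destruct (constructive_indefinite_description _ (G1' i)); auto. }
    destruct (G2 (S t)) as [s [Hs Hds]]. destruct (G2' (S t)) as [s' [Hs' Hds']].
    assert (Hps : forall i, d (f (p i)) (p (S i)) < delta / 4 + eta).
    { intro i. apply (Hstep x (n + i)%nat). apply Hp. rewrite <- Nat.add_succ_r. apply Hp. }
    assert (Hps' : forall i, d (f (p' i)) (p' (S i)) < delta / 4 + eta).
    { intro i. apply (Hstep x' (n' + i)%nat). apply Hp'. rewrite <- Nat.add_succ_r. apply Hp'. }
    assert (H00 : d (p O) (p' O) < 3 * eta).
    { pose proof (proj2 (Hp O)). pose proof (proj2 (Hp' O)). rewrite Nat.add_0_r in H, H0.
      pose proof (d_tri _ _ Hm (p O) (Nat.iter n f x) (p' O)).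
      pose proof (d_tri _ _ Hm (Nat.iter n f x) (Nat.iter n' f x') (p' O)).
      rewrite (d_sym _ _ Hm (p O) (Nat.iter n f x)) in H1. lra. }
    set (B := fun i => if Nat.eqb i 0 then p O else p' i).
    assert (Hsep : ~ d (p (S t)) (B (S t)) > 4 * eps).
    { intro Hgt. apply Hno.
      refine (horseshoe X d f Hm g Hfg Om_g eps delta Heps HP s s' p B _ _ _ _ _ _ _ _ _ (S t) _ _ Hgt); try lia.
      - reflexivity.
      - intros i _. apply Hp.
      - intros [|i] _; unfold B; simpl. apply Hp. apply Hp'.
      - intros i _. pose proof (Hps i). lra.
      - intros [|i] Hi; unfold B; simpl.
        + pose proof (d_tri _ _ Hm (f (p O)) (f (p' O)) (p' 1%nat)). pose proof (Hu (p O) (p' O) ltac:(lra)).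
          pose proof (Hps' O). lra.
        + pose proof (Hps' (S i)). lra.
      -
        destruct s as [|s0]. lia. simpl pred.
        pose proof (proj2 (Hp s0)). pose proof (proj2 (Hp O)). rewrite Nat.add_0_r in H0.
        assert (Hf1 : d (f (p s0)) (Nat.iter (n + S s0) f x) < delta / 4).
        { rewrite Nat.add_succ_r. simpl. apply Hu. rewrite (d_sym _ _ Hm). lra. }
        pose proof (d_tri _ _ Hm (f (p s0)) (Nat.iter (n + S s0) f x) (p O)).
        pose proof (d_tri _ _ Hm (Nat.iter (n + S s0) f x) (Nat.iter n f x) (p O)). lra.
      - destruct s' as [|s0]. lia. simpl pred. unfold B. simpl.
        destruct s0 as [|s1]. lia. simpl.
        pose proof (proj2 (Hp' (S s1))). pose proof (proj2 (Hp O)). rewrite Nat.add_0_r in H0.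
        assert (Hf1 : d (f (p' (S s1))) (Nat.iter (n' + S (S s1)) f x') < delta / 4).
        { rewrite (Nat.add_succ_r n' (S s1)). simpl. apply Hu. rewrite (d_sym _ _ Hm). simpl in H. lra. }
        pose proof (d_tri _ _ Hm (f (p' (S s1))) (Nat.iter (n' + S (S s1)) f x') (p O)).
        pose proof (d_tri _ _ Hm (Nat.iter (n' + S (S s1)) f x') (Nat.iter n' f x') (p O)).
        pose proof (d_tri _ _ Hm (Nat.iter n' f x') (Nat.iter n f x) (p O)).
        rewrite (d_sym _ _ Hm (Nat.iter n' f x') (Nat.iter n f x)) in H4. lra. }
    unfold B in Hsep. simpl in Hsep. apply Rnot_gt_le in Hsep.
    pose proof (proj2 (Hp (S t))). pose proof (proj2 (Hp' (S t))).
    pose proof (d_tri _ _ Hm (Nat.iter (n + S t) f x) (p (S t)) (Nat.iter (n' + S t) f x')).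
    pose proof (d_tri _ _ Hm (p (S t)) (p' (S t)) (Nat.iter (n' + S t) f x')).
    rewrite (d_sym _ _ Hm (p' (S t)) (Nat.iter (n' + S t) f x')) in H2. lra.
Qed.

End Main.
Theorem theorem1 (X : Type) (d : X -> X -> R) (f : X -> X)
  (Hmetric : is_metric d) (Hcompact : compact_metric d)
  (Hhomeo : homeomorphism d f)
  (Hpotp : potp_on_nonwandering d f)
  (Hexp : exists mu : (X -> Prop) -> R, positively_expansive_measure d f mu) :
  positive_topological_entropy d f.
Proof.
  destruct Hexp as [mu [Hmu [e [He Hphi]]]].
  destruct Hhomeo as [g [Hfc [Hgc [Hgf Hfg]]]].
  set (eps := e / 16).
  destruct (Hpotp eps ltac:(unfold eps; lra)) as [delta [Hdelta HP]].
  destruct (unif_cont X d f Hmetric Hcompact Hfc (delta / 4) ltac:(lra)) as [rho [Hrho Hu]].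
  set (eta := Rmin (Rmin (rho / 3) (delta / 8)) eps).
  assert (Heta : eta > 0). { unfold eta, eps. repeat apply Rmin_pos; lra. }
  assert (Heta1 : 3 * eta <= rho). { pose proof (Rmin_l (Rmin (rho/3) (delta/8)) eps). pose proof (Rmin_l (rho/3) (delta/8)). unfold eta; lra. }
  assert (Heta2 : 8 * eta <= delta). { pose proof (Rmin_l (Rmin (rho/3) (delta/8)) eps). pose proof (Rmin_r (rho/3) (delta/8)). unfold eta; lra. }
  assert (Heta3 : eta <= eps). { apply Rmin_r. }
  apply NNPP; intro Hno.
  pose (A := fun y => exists x n, Good X d f eta x n /\ y = Nat.iter n f x).
  destruct (TB_ball X d Hmetric Hcompact A eta Heta) as [L [HL1 HL2]].
  pose (S' := fun g0 n y => forall t, d (Nat.iter (n + t) f y) (Nat.iter t f g0) <= 6 * eps).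
  assert (HPhiN : forall b, Null X d mu (Phi d f e b)).
  { intro b. exists (Phi d f e b). split; [|split; auto].
    apply borel_closed. intros y Hy. unfold Phi in Hy. apply not_all_ex_not in Hy. destruct Hy as [i Hi].
    apply Rnot_le_lt in Hi.
    destruct (iter_cont X d f Hfc i y (d (Nat.iter i f b) (Nat.iter i f y) - e) ltac:(lra)) as [r [Hr Hc]].
    exists r; split; auto. intros z Hz Hphz. specialize (Hphz i). specialize (Hc z Hz).
    pose proof (d_tri _ _ Hmetric (Nat.iter i f b) (Nat.iter i f z) (Nat.iter i f y)).
    rewrite (d_sym _ _ Hmetric (Nat.iter i f z) (Nat.iter i f y)) in H. lra. }
  assert (HS'N : forall g0 n, Null X d mu (S' g0 n)).
  { intros g0 n. destruct (TB_bowen X d f Hmetric Hcompact Hfc (S' g0 n) n (e/2) ltac:(lra)) as [L2 [HL21 HL22]].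
    apply (Null_sub X d mu _ (fun x => exists b, In b L2 /\ Phi d f e b x)).
    - apply Null_list; auto.
    - intros y Hy. destruct (HL22 y Hy) as [b [Hb Hrel]]. exists b; split; auto.
      intro i. destruct (lt_dec i n) as [Hi|Hi].
      + rewrite (d_sym _ _ Hmetric). pose proof (Hrel i Hi). lra.
      + replace i with (n + (i - n))%nat by lia. pose proof (Hy (i - n)%nat). pose proof (HL21 b Hb (i - n)%nat).
        pose proof (d_tri _ _ Hmetric (Nat.iter (n + (i - n)) f b) (Nat.iter (i - n) f g0) (Nat.iter (n + (i - n)) f y)).
        rewrite (d_sym _ _ Hmetric (Nat.iter (i - n) f g0)) in H1. unfold eps in *. lra. }
  apply (not_Null_True X d mu Hmu).
  apply (Null_sub X d mu _ (fun x => exists g0, In g0 L /\ (fun g0 x => exists n, S' g0 n x) g0 x)).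
  - apply Null_list; auto. intros g0 _. apply Null_cunion; auto.
  - intros x _. destruct (exists_good X d f Hmetric Hcompact eta x Heta) as [n Hn].
    destruct (HL2 (Nat.iter n f x)) as [g0 [Hg0 Hd0]]. { exists x, n; auto. }
    exists g0; split; auto. exists n. destruct (HL1 g0 Hg0) as [x' [n' [Hn' ->]]].
    intro t. pose proof (compare X d f Hmetric g Hgc Hgf Hfg eps delta rho eta ltac:(unfold eps; lra) HP Hrho Hu Heta Heta1 Heta2 Hno x n x' n' Hn Hn' Hd0 t).
    rewrite <- Nat.iter_add, (Nat.add_comm t n'). unfold eps in *; lra.
Qed.
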